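(* Let $\Phi$ be a stable central pair potential with stability constant $B\ge0$, $\beta>0$, $u:=e^{2\beta B}$, and let $R$ be a partition scheme for $\mathcal C[n+1]$. For every tree $\tau\in\mathcal T[n+1]$ and every configuration $(x_1,\dots,x_{n+1})\in(\mathbb R^d)^{n+1}$ there exists a permutation $\Pi$ of $[n+1]$ such that $$\prod_{\{i,j\}\in E(R(\tau))\setminus E(\tau)}\big(1+f_{\Pi(i),\Pi(j)}\big)\le u^{n-1}.$$
   Context: $f_{i,j}:=e^{-\beta\Phi(x_i,x_j)}-1$, so $1+f_{i,j}=e^{-\beta\Phi(x_i,x_j)}$. Stability: $\sum_{1\le i<j\le N}\Phi(x_i,x_j)\ge -BN$ for all $N$ and all configurations. $\mathcal C[N]$ and $\mathcal T[N]$ denote the connected graphs and the trees on $[N]=\{1,\dots,N\}$, partially ordered by edge inclusion; for $G\le H$, $[G,H]=\{K: G\le K\le H\}$. A partition scheme is a map $R:\mathcal T[N]\to\mathcal C[N]$ with $E(R(\tau))\supseteq E(\tau)$ for all $\tau$, such that $\mathcal C[N]$ is the disjoint union of the intervals $[\tau,R(\tau)]$, $\tau\in\mathcal T[N]$. *)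

(* Defs.v *)
From Stdlib Require Import Reals.
From mathcomp Require Import all_boot all_fingroup.

Set Implicit Arguments.
Unset Strict Implicit.
Unset Printing Implicit Defensive.

Definition point (d : nat) := 'I_d -> R.

Definition eucl_dist (d : nat) (x y : point d) : R :=
  sqrt (\big[Rplus/R0]_(k < d) (Rmult (Rminus (x k) (y k)) (Rminus (x k) (y k)))).

(* A pair potential with values in R ∪ {+∞}; [None] encodes +∞. *)
Definition potential (d : nat) := point d -> point d -> option R.

Definition central (d : nat) (Phi : potential d) : Prop :=
  exists phi : R -> option R, forall x y, Phi x y = phi (eucl_dist x y).

Definition ext_add (a b : option R) : option R :=
  match a, b with Some s, Some t => Some (Rplus s t) | _, _ => None end.

Definition pair_energy (d N : nat) (Phi : potential d) (x : 'I_N -> point d)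
  : option R :=
  \big[ext_add/Some R0]_(i < N) \big[ext_add/Some R0]_(j < N | (i < j)%N)
     Phi (x i) (x j).

Definition stable (d : nat) (Phi : potential d) (B : R) : Prop :=
  forall (N : nat) (x : 'I_N -> point d),
    match pair_energy Phi x with
    | None => True
    | Some s => Rge s (Ropp (Rmult B (INR N)))
    end.

(* Boltzmann factor e^{-βΦ} = 1 + f, with e^{-β(+∞)} = 0. *)
Definition boltz (beta : R) (p : option R) : R :=
  match p with None => R0 | Some v => exp (Ropp (Rmult beta v)) end.

(* Graphs on the vertex set 'I_N (= [N], 0-indexed), as sets of edges;
   an edge is a 2-element subset of vertices. *)
Definition is_graph (N : nat) (G : {set {set 'I_N}}) : bool :=
  [forall e in G, #|e| == 2].

Definition adj (N : nat) (G : {set {set 'I_N}}) : rel 'I_N :=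
  fun u v => [set u; v] \in G.

Definition connected_graph (N : nat) (G : {set {set 'I_N}}) : Prop :=
  is_graph G /\ forall u v : 'I_N, connect (adj G) u v.

Definition is_tree (N : nat) (G : {set {set 'I_N}}) : Prop :=
  connected_graph G /\ #|G| = N.-1.

(* Partition scheme: R maps trees to connected graphs containing them, and
   C[N] is the disjoint union of the intervals [τ, R τ]. *)
Definition partition_scheme (N : nat)
  (Rs : {set {set 'I_N}} -> {set {set 'I_N}}) : Prop :=
  (forall t, is_tree t -> connected_graph (Rs t) /\ t \subset Rs t) /\
  (forall G, connected_graph G ->
     exists t, [/\ is_tree t, t \subset G, G \subset Rs t &
       forall t', is_tree t' -> t' \subset G -> G \subset Rs t' -> t' = t]).

(* Main.v *)
Require Import Defs.
From HB Require Import structures.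
From Stdlib Require Import Reals Lra Lia Classical.
From mathcomp Require Import all_boot all_fingroup zify.

Set Implicit Arguments.
Unset Strict Implicit.
Unset Printing Implicit Defensive.

Local Lemma RaddA : associative Rplus.
Proof. by move=> a b c; rewrite Rplus_assoc. Qed.
Local Lemma RmulA : associative Rmult.
Proof. by move=> a b c; rewrite Rmult_assoc. Qed.
HB.instance Definition _ := Monoid.isComLaw.Build R R0 Rplus RaddA Rplus_comm Rplus_0_l.
HB.instance Definition _ := Monoid.isComLaw.Build R R1 Rmult RmulA Rmult_comm Rmult_1_l.

Open Scope R_scope.

Lemma sumR_scale (T : finType) (P : pred T) (F : T -> R) c :
  \big[Rplus/R0]_(i | P i) (c * F i) = c * \big[Rplus/R0]_(i | P i) F i.
Proof.
symmetry; apply: (big_morph (fun s => c * s)).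
- by move=> a b; rewrite Rmult_plus_distr_l.
- by rewrite Rmult_0_r.
Qed.

Lemma prodR_exp (T : finType) (P : pred T) (F : T -> R) :
  \big[Rmult/R1]_(i | P i) exp (F i) = exp (\big[Rplus/R0]_(i | P i) F i).
Proof.
symmetry; apply: (big_morph exp).
- by move=> a b; rewrite exp_plus.
- by rewrite exp_0.
Qed.

Lemma sumR_le (T : finType) (P : pred T) (F G : T -> R) :
  (forall i, P i -> F i <= G i) ->
  \big[Rplus/R0]_(i | P i) F i <= \big[Rplus/R0]_(i | P i) G i.
Proof.
move=> H; apply: (big_ind2 (fun a b => a <= b)) => //.
- by apply: Rle_refl.
- by move=> a b c e; apply: Rplus_le_compat.
Qed.

Lemma sumR_const (T : finType) (P : pred T) c :
  \big[Rplus/R0]_(i | P i) c = INR #|P| * c.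
Proof.
have -> : \big[Rplus/R0]_(i | P i) c = \big[Rplus/R0]_(i in P) c by [].
rewrite big_const.
elim: #|_| => /= [|k ->]; first by rewrite Rmult_0_l.
by case: k => [|k] /=; ring.
Qed.

Lemma sumR_lt (T : finType) (F : T -> R) c (x0 : T) :
  (forall i, F i < c) -> \big[Rplus/R0]_i F i < INR #|T| * c.
Proof.
move=> H.
have E : \big[Rplus/R0]_i c = INR #|T| * c := sumR_const predT c.
rewrite -E (bigD1 x0) //= [X in _ < X](bigD1 x0) //=.
apply: Rplus_lt_le_compat => //.
by apply: sumR_le => i _; apply: Rlt_le.
Qed.

Lemma pow_exp a k : exp a ^ k = exp (INR k * a).
Proof.
elim: k => [|k IH] /=; first by rewrite Rmult_0_l exp_0.
rewrite IH -exp_plus; congr exp.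
by case: k {IH} => [|k] /=; ring.
Qed.

Lemma exp_le a b : a <= b -> exp a <= exp b.
Proof.
case=> [h|->]; last by apply: Rle_refl.
by apply: Rlt_le; apply: exp_increasing.
Qed.

Lemma perm2 (T : finType) (k l i j : T) : k != l -> i != j ->
  exists s : {perm T}, s k = i /\ s l = j.
Proof.
move=> kl ij.
set s1 := tperm k i.
have h1 : s1 k = i by rewrite tpermL.
have h2 : s1 l != i.
  by apply/eqP => e; move: kl; rewrite -h1 in e; rewrite (perm_inj e) eqxx.
exists (s1 * tperm (s1 l) j)%g; rewrite !permM h1 tpermL; split => //.
by rewrite tpermD // eq_sym.
Qed.
Lemma card_distinct n :
  #|[pred ij : 'I_n.+1 * 'I_n.+1 | ij.1 != ij.2]| = (n.+1 * n)%N.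
Proof.
rewrite -sum1_card.
rewrite (eq_bigl (fun ij : 'I_n.+1 * 'I_n.+1 => predT ij.1 && (ij.1 != ij.2))) //.
rewrite -(pair_big_dep predT (fun i j => i != j) (fun _ _ => 1%N)) /=.
rewrite (eq_bigr (fun _ => n)); last first.
  move=> i _; rewrite sum1_card.
  transitivity #|predC1 i|; last by rewrite cardC1 card_ord.
  by apply: eq_card => j; rewrite !inE eq_sym.
by rewrite sum_nat_const card_ord.
Qed.

Lemma card_swap n :
  #|[pred ij : 'I_n.+1 * 'I_n.+1 | (ij.2 < ij.1)%N]| =
  #|[pred ij : 'I_n.+1 * 'I_n.+1 | (ij.1 < ij.2)%N]|.
Proof.
rewrite -!sum1_card.
rewrite (reindex_inj (h := fun ij : 'I_n.+1 * 'I_n.+1 => (ij.2, ij.1))) //.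
by move=> [a1 a2] [b1 b2] [-> ->].
Qed.

Lemma card_split n :
  #|[pred ij : 'I_n.+1 * 'I_n.+1 | ij.1 != ij.2]| =
  (#|[pred ij : 'I_n.+1 * 'I_n.+1 | (ij.1 < ij.2)%N]| +
   #|[pred ij : 'I_n.+1 * 'I_n.+1 | (ij.2 < ij.1)%N]|)%N.
Proof.
rewrite -(cardID [pred ij : 'I_n.+1 * 'I_n.+1 | (ij.1 < ij.2)%N]).
congr (_ + _)%N; apply: eq_card => [[i j]]; rewrite !inE /= -(inj_eq val_inj) /=;
  by case: ltngtP.
Qed.
Lemma ord_neq n (i j : 'I_n) : (i < j)%N -> i != j.
Proof. by move=> h; rewrite -(inj_eq val_inj) /= neq_ltn h. Qed.

Lemma avg n (phi : 'I_n.+1 -> 'I_n.+1 -> R) (pA : pred ('I_n.+1 * 'I_n.+1)) (B : R) (a b i0 j0 : 'I_n.+1) :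
  (forall i j, phi i j = phi j i) ->
  (forall ij, pA ij -> (ij.1 < ij.2)%N) ->
  (a < b)%N -> ~~ pA (a,b) -> pA (i0, j0) -> 0 <= B ->
  - (B * INR n.+1) <= \big[Rplus/R0]_(i < n.+1) \big[Rplus/R0]_(j < n.+1 | (i < j)%N) phi i j ->
  exists P : {perm 'I_n.+1},
    - (2 * B * INR (n - 1)) <= \big[Rplus/R0]_(ij | pA ij) phi (P ij.1) (P ij.2).
Proof.
move=> sym hA ab nab hi0 B0 stab.
set I := 'I_n.+1.
set Ep := \big[Rplus/R0]_i _ in stab.
pose pD : pred (I*I) := fun ij => ij.1 != ij.2.
pose S (ij : I*I) := \big[Rplus/R0]_(P : {perm I}) phi (P ij.1) (P ij.2).
pose G (P : {perm I}) := \big[Rplus/R0]_(ij | pA ij) phi (P ij.1) (P ij.2).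
pose s := S (i0, j0).
pose K := INR #|{perm I}|.
have i0j0 : i0 != j0 by apply: ord_neq; exact: (hA _ hi0).
have Sc : forall ij, pD ij -> S ij = s.
  move=> [i j] /= hij.
  have [sg [h1 h2]] := perm2 i0j0 hij.
  rewrite /= in h1 h2; rewrite /s /S /= -h1 -h2 [RHS](reindex_inj (mulgI sg)) /=.
  by apply: eq_bigr => P _; rewrite !permM.
have hE : \big[Rplus/R0]_(ij | pD ij) phi ij.1 ij.2 = 2 * Ep.
  rewrite (eq_bigl (fun ij : I * I => predT ij.1 && (ij.1 != ij.2))) //.
  rewrite -(pair_big_dep predT (fun i j => i != j) (fun i j => phi i j)) /=.
  rewrite (eq_bigr (fun i : I => \big[Rplus/R0]_(j < n.+1 | (i < j)%N) phi i j +
                              \big[Rplus/R0]_(j < n.+1 | (j < i)%N) phi i j)); last first.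
    move=> i _.
    rewrite big_mkcond [X in _ = X + _]big_mkcond [X in _ = _ + X]big_mkcond -big_split /=.
    apply: eq_bigr => j _; rewrite -(inj_eq val_inj) /= neq_ltn.
    by case: ltngtP => _ /=; ring.
  rewrite big_split /= [X in _ + X](exchange_big_dep predT) //=.
  rewrite [X in _ + X = _](eq_bigr (fun i : I => \big[Rplus/R0]_(j < n.+1 | (i < j)%N) phi i j)) /Ep; first by rewrite RIneq.double.
  by move=> i _; apply: eq_bigr => j _; rewrite sym.
have hK : \big[Rplus/R0]_(P : {perm I}) \big[Rplus/R0]_(ij | pD ij) phi (P ij.1) (P ij.2)
          = K * (2 * Ep).
  rewrite -hE /K -(sumR_const predT); apply: eq_bigr => P _.
  rewrite [RHS](reindex_inj (h := fun ij : I * I => (P ij.1, P ij.2))) /=; last first.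
    by move=> [a1 a2] [b1 b2] [/perm_inj -> /perm_inj ->].
  by apply: eq_bigl => ij; rewrite /pD /= (inj_eq perm_inj).
have hD : INR #|pD| * s = K * (2 * Ep).
  rewrite -hK -sumR_const (eq_bigr S); last by move=> ij /Sc ->.
  by rewrite /S exchange_big.
have hG : \big[Rplus/R0]_(P : {perm I}) G P = INR #|pA| * s.
  rewrite -sumR_const (eq_bigr S); last first.
    by move=> ij hij; rewrite Sc //; apply: ord_neq; apply: hA.
  by rewrite /S /G exchange_big.
have cD : #|pD| = (n.+1 * n)%N by rewrite -(card_distinct n); apply: eq_card.
have cA : (#|pA|.+1 <= #|[pred ij : 'I_n.+1 * 'I_n.+1 | (ij.1 < ij.2)%N]|)%N.
  apply: proper_card; apply/properP; split.
    by apply/subsetP => ij; rewrite unfold_in /= => /hA.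
  by exists (a, b); rewrite !unfold_in.
have cL : (2 * #|pA| + 2 <= n.+1 * n)%N.
  have := card_split n; have := card_swap n; rewrite card_distinct => e1 e2.
  move: cA; lia.
have n1 : (1 <= n)%N.
  have := hA _ hi0; rewrite /= => h; have := ltn_ord j0; lia.
have cM : (#|pA| <= n * (n - 1))%N by nia.
have Hn1 : INR (n - 1) = INR n - 1.
  case: (n) n1 => // k _; rewrite subn1 /=; case: k => [|k] /=; ring.
have HD : INR #|pD| = (INR n + 1) * INR n by rewrite cD mult_INR S_INR.
have HM : INR #|pA| <= INR n * (INR n - 1).
  by rewrite -Hn1 -mult_INR; apply: le_INR; apply/leP.
have HN : 1 <= INR n by apply: (le_INR 1); apply/leP.
have HK : 0 <= K := pos_INR _.
have Hm0 : 0 <= INR #|pA| := pos_INR _.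
rewrite HD in hD.
have h0 := Rmult_le_compat_l K _ _ HK stab.
have h1 : -(2*K*B) <= INR n * s.
  apply: (Rmult_le_reg_l (INR n + 1)); first lra.
  rewrite -Rmult_assoc hD; rewrite S_INR in h0; nra.
have h2 := Rmult_le_compat_l _ _ _ Hm0 h1.
have KB : 0 <= K * B by apply: Rmult_le_pos.
have h3 : -(2*K*B) * (INR n * (INR n - 1)) <= -(2*K*B) * INR #|pA|.
  apply: Rmult_le_compat_neg_l => //; lra.
have Hsum : K * (- (2 * B * INR (n - 1))) <= \big[Rplus/R0]_(P : {perm I}) G P.
  rewrite hG Hn1; apply: (Rmult_le_reg_l (INR n)); first lra.
  have e1 : INR n * (K * - (2 * B * (INR n - 1))) = - (2 * K * B) * (INR n * (INR n - 1)) by ring.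
  have e2 : INR n * (INR #|pA| * s) = INR #|pA| * (INR n * s) by ring.
  rewrite e1 e2; apply: Rle_trans h3 _; rewrite Rmult_comm; exact h2.
case: (classic (exists P, - (2 * B * INR (n - 1)) <= G P)) => [[P HP]|HnP].
  by exists P.
exfalso.
have Hlt : forall P, G P < - (2 * B * INR (n - 1)).
  move=> P; apply: Rnot_le_lt => h; apply: HnP; by exists P.
have := @sumR_lt {perm I} G _ 1%g Hlt; rewrite -/K => hl.
apply: (Rlt_irrefl (K * - (2 * B * INR (n - 1)))); apply: Rle_lt_trans Hsum _; exact: hl.
Qed.

Lemma dist_sym d (y z : point d) : eucl_dist y z = eucl_dist z y.
Proof. by rewrite /eucl_dist; congr sqrt; apply: eq_bigr => k _; ring. Qed.

Theorem lemma6p6 (d : nat) (Phi : potential d) (B beta : R) (n : nat)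
  (Rs : {set {set 'I_n.+1}} -> {set {set 'I_n.+1}}) :
  central Phi -> stable Phi B -> Rle R0 B -> Rlt R0 beta ->
  partition_scheme Rs ->
  forall (t : {set {set 'I_n.+1}}) (x : 'I_n.+1 -> point d),
    is_tree t ->
    exists Pi : {perm 'I_n.+1},
      Rle (\big[Rmult/R1]_(i < n.+1)
         \big[Rmult/R1]_(j < n.+1 | (i < j)%N && ([set i; j] \in Rs t :\: t))
            boltz beta (Phi (x (Pi i)) (x (Pi j))))
       (pow (exp (Rmult (Rmult (INR 2) beta) B)) (n - 1)).
Proof.
move=> cen stab B0 beta0 _ t x [[gr _] ct].
pose pA : pred ('I_n.+1 * 'I_n.+1) :=
  fun ij => (ij.1 < ij.2)%N && ([set ij.1; ij.2] \in Rs t :\: t).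
have Hprod : forall P : {perm 'I_n.+1},
  \big[Rmult/R1]_(i < n.+1)
     \big[Rmult/R1]_(j < n.+1 | (i < j)%N && ([set i; j] \in Rs t :\: t))
        boltz beta (Phi (x (P i)) (x (P j))) =
  \big[Rmult/R1]_(ij | pA ij) boltz beta (Phi (x (P ij.1)) (x (P ij.2))).
  move=> P; rewrite (pair_big_dep predT (fun i j : 'I_n.+1 => (i < j)%N && ([set i; j] \in Rs t :\: t))
    (fun i j : 'I_n.+1 => boltz beta (Phi (x (P i)) (x (P j))))).
  by apply: eq_bigl.
have u1 : 0 <= INR 2 * beta * B.
  by apply: Rmult_le_pos => //; apply: Rmult_le_pos; [apply: pos_INR | apply: Rlt_le].
case: (pickP pA) => [[i0 j0] hi0 | hnone]; last first.
  exists 1%g; rewrite Hprod big_pred0 //; apply: pow_R1_Rle.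
  by rewrite -exp_0; apply: exp_le.
have hA : forall ij, pA ij -> (ij.1 < ij.2)%N by move=> ij /andP [].
have i0j0 : i0 != j0 by apply: ord_neq; exact: (hA _ hi0).
(* a tree edge *)
have [a [b [ab nab]]] : exists a b : 'I_n.+1, (a < b)%N /\ ~~ pA (a, b).
  have t0 : (0 < #|t|)%N.
    rewrite ct; have := ltn_ord j0; have := hA _ hi0; rewrite /=; lia.
  case/card_gt0P: t0 => e et.
  have /cards2P [u [v [uv E]]] : #|e| == 2%N by move/forallP: gr => /(_ e); rewrite et.
  rewrite E in et; move: et => in_t.
  have nA : forall a b : 'I_n.+1, [set a; b] \in t -> ~~ pA (a, b).
    by move=> a' b' h; rewrite /pA /= in_setD h andbF.
  case: (ltngtP u v) => h.
  - by exists u, v; split => //; apply: nA.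
  - exists v, u; split => //; apply: nA; by rewrite setUC.
  - by move: uv; rewrite -(inj_eq val_inj) /= h eqxx.
have symP : forall u v, Phi (x u) (x v) = Phi (x v) (x u).
  by move=> u v; case: cen => ph hph; rewrite !hph dist_sym.
case: (classic (exists u v, u != v /\ Phi (x u) (x v) = None)) => [[u [v [uv hN]]] | hfin].
  have [sg [h1 h2]] := perm2 i0j0 uv.
  exists sg; rewrite Hprod (bigD1 (i0, j0)) //= h1 h2 hN /= Rmult_0_l.
  by apply: pow_le; apply: Rlt_le; apply: exp_pos.
pose phi (u v : 'I_n.+1) := match Phi (x u) (x v) with Some r => r | None => R0 end.
have hfin' : forall u v, u != v -> Phi (x u) (x v) = Some (phi u v).
  move=> u v uv; rewrite /phi; case E: (Phi (x u) (x v)) => [r|] //.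
  by exfalso; apply: hfin; exists u, v.
have sym : forall u v, phi u v = phi v u by move=> u v; rewrite /phi symP.
have HE : pair_energy Phi x =
   Some (\big[Rplus/R0]_(i < n.+1) \big[Rplus/R0]_(j < n.+1 | (i < j)%N) phi i j).
  rewrite /pair_energy.
  rewrite (eq_bigr (fun i : 'I_n.+1 => Some (\big[Rplus/R0]_(j < n.+1 | (i < j)%N) phi i j))).
    by symmetry; apply: (big_morph (@Some R)).
  move=> i _; rewrite (eq_bigr (fun j : 'I_n.+1 => Some (phi i j))).
    by symmetry; apply: (big_morph (@Some R)).
  by move=> j hij; apply: hfin'; apply: ord_neq.
have st := stab n.+1 x; rewrite HE in st.
have [P HP] := avg sym hA ab nab hi0 B0 (Rge_le _ _ st).
exists P; rewrite Hprod.
rewrite (eq_bigr (fun ij => exp (- beta * phi (P ij.1) (P ij.2)))); last first.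
  move=> [i j] /= hij; rewrite hfin' /=; first by rewrite Ropp_mult_distr_l.
  by rewrite (inj_eq perm_inj); apply: ord_neq; exact: (hA _ hij).
rewrite prodR_exp sumR_scale pow_exp; apply: exp_le.
have := Rmult_le_compat_l beta _ _ (Rlt_le _ _ beta0) HP.
rewrite /= => h.
apply: (Rle_trans _ (- (beta * - (2 * B * INR (n - 1))))).
  rewrite -Ropp_mult_distr_l; apply: Ropp_le_contravar; exact: h.
by right; ring.
Qed.
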